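(* Let $\mathcal H$ be a finite-dimensional Hilbert space, $\mathcal D$ the set of density operators on $\mathcal H$, and consider the two-time-scale Lindblad equation $\frac{d\rho}{dt} = (\mathcal L_0 + \epsilon \mathcal L_1)\rho$, where $\mathcal L_0$ is a Lindblad super-operator and $\epsilon>0$ is small. Assume that for $\epsilon=0$ the dynamics converge to a stationary regime, i.e. the limit $U_0\rho := \lim_{t\to\infty} e^{t\mathcal L_0}\rho$ exists for all $\rho\in\mathcal D$, and write it in Kraus form $U_0\rho = \sum_\mu M_\mu \rho M_\mu^\dagger$ with $\sum_\mu M_\mu^\dagger M_\mu = \mathbb I_{\mathcal H}$. Assume that the set of steady states $\mathcal D_0 = \{\rho\in\mathcal D : \mathcal L_0\rho = 0\}$ coincides with the set of density operators supported on a subspace $\mathcal H_0\subseteq\mathcal H$. Let $\{|n\rangle\}_{n=1}^{\dim\mathcal H_0}$ be an orthonormal basis of $\mathcal H_0$, $P_n = |n\rangle\langle n|$, $P_0=\sum_n P_n$, and assume $$\mathcal L_1\rho = \sum_{n=1}^{\dim \mathcal H_0}\Big(P_n\rho P_n^\dagger - \tfrac12 P_n^\dagger P_n\rho - \tfrac12 \rho P_n^\dagger P_n\Big).$$ Then the first-order (in $\epsilon$) effective dynamics of $\rho_e\in\mathcal D_0$ obtained by adiabatic elimination — i.e. $\frac{d\rho_e}{dt} = (\mathcal L_{e,0}+\epsilon\mathcal L_{e,1})\rho_e + O(\epsilon^2)$, where $\mathcal L_{e,0}=0$ and $\mathcal L_{e,1}\rho_e = K_0\big(U_0\mathcal L_1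 K_0(\rho_e)\big)$ with $K_0(\rho)=P_0\rho P_0$ — is the Lindblad equation $$\frac{d\rho_e}{dt} = \epsilon\sum_{n,m=1}^{\dim\mathcal H_0}\kappa_{nm}\Big(R_{nm}\rho_e R_{nm}^\dagger - \tfrac12 R_{nm}^\dagger R_{nm}\rho_e - \tfrac12\rho_e R_{nm}^\dagger R_{nm}\Big),$$ where $R_{nm} = |n\rangle\langle m|$ and $\kappa_{nm} = \sum_\mu |\langle n|M_\mu|m\rangle|^2$.
   Context: A Lindblad super-operator has the form $\mathcal L\rho = -i[H,\rho]+\sum_k D_{R_k}[\rho]$ with $H$ Hermitian and dissipator $D_R[\rho] = R\rho R^\dagger - \tfrac12(R^\dagger R\rho+\rho R^\dagger R)$. The adiabatic elimination framework: one seeks a map $\rho = K(\rho_e)=\sum_{m\ge0}\epsilon^m K_m(\rho_e)$ and an effective generator $\mathcal L_e = \mathcal L_{e,0}+\epsilon\mathcal L_{e,1}+O(\epsilon^2)$ with $(\mathcal L_0+\epsilon\mathcal L_1)K(\rho_e) = K(\mathcal L_e\rho_e)$, where $K_0$ is the projection onto $\mathcal D_0$ given by $K_0(\rho)=P_0\rho P_0$. *)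

(* Defs.v *)
From HB Require Import structures.
From mathcomp Require Import all_boot all_order all_algebra.
From mathcomp Require Import all_classical all_reals all_analysis.
From mathcomp Require Import complex.
Set Implicit Arguments. Unset Strict Implicit. Unset Printing Implicit Defensive.
Import Order.TTheory GRing.Theory Num.Theory.
Import numFieldNormedType.Exports.
Local Open Scope ring_scope.
Local Open Scope complex_scope.
Local Open Scope classical_set_scope.

Section Quantum.
Variable R : realType.
Local Notation C := R[i].

Definition dag m n (A : 'M[C]_(m, n)) : 'M[C]_(n, m) := (map_mx (@conjc R) A)^T.

Definition commut d (A B : 'M[C]_d) : 'M[C]_d := A *m B - B *m A.

Definition dissip d (Rk rho : 'M[C]_d) : 'M[C]_d :=
  Rk *m rho *m dag Rk - 2^-1 *: (dag Rk *m Rk *m rho + rho *m (dag Rk *m Rk)).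

Definition is_lindblad d (L : 'M[C]_d -> 'M[C]_d) : Prop :=
  exists (H : 'M[C]_d) (Rs : seq 'M[C]_d),
    dag H = H /\
    forall rho, L rho = - ('i *: commut H rho) + \sum_(Rk <- Rs) dissip Rk rho.

Definition density d (rho : 'M[C]_d) : Prop :=
  [/\ dag rho = rho,
      (forall v : 'cV[C]_d, 0 <= (dag v *m rho *m v) 0 0) &
      \tr rho = 1].

(* rho is supported on the subspace spanned by the columns of E,
   i.e. the range of rho is contained in that subspace *)
Definition supported_on d d0 (E : 'M[C]_(d, d0)) (rho : 'M[C]_d) : Prop :=
  exists X : 'M[C]_(d0, d), rho = E *m X.

Definition orthonormal_vecs d d0 (e : 'I_d0 -> 'cV[C]_d) : Prop :=
  forall n m, (dag (e n) *m e m) 0 0 = (n == m)%:R.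

Definition basis_mx d d0 (e : 'I_d0 -> 'cV[C]_d) : 'M[C]_(d, d0) :=
  \matrix_(i, n) e n i 0.

Definition ketbra d (u v : 'cV[C]_d) : 'M[C]_d := u *m dag v.

(* exp(t L) rho, defined entrywise as the sum of the exponential series
   sum_k t^k/k! L^k rho (real and imaginary parts separately) *)
Definition exp_partial d (L : 'M[C]_d -> 'M[C]_d) (t : R) (rho : 'M[C]_d) (N : nat)
  : 'M[C]_d :=
  \sum_(k < N) ((t ^+ k / (k`!)%:R)%:C *: iter k L rho).

Definition semigroup d (L : 'M[C]_d -> 'M[C]_d) (t : R) (rho : 'M[C]_d) : 'M[C]_d :=
  \matrix_(i, j)
    (lim ((fun N => complex.Re (exp_partial L t rho N i j)) @ \oo) +i*
     lim ((fun N => complex.Im (exp_partial L t rho N i j)) @ \oo)).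

Definition cvg_pinfty (f : R -> C) (z : C) : Prop :=
  ((fun t => complex.Re (f t)) @ +oo --> complex.Re z) /\ ((fun t => complex.Im (f t)) @ +oo --> complex.Im z).

Definition kraus d k (M : 'I_k -> 'M[C]_d) (rho : 'M[C]_d) : 'M[C]_d :=
  \sum_(mu < k) M mu *m rho *m dag (M mu).

Definition projn d d0 (e : 'I_d0 -> 'cV[C]_d) (n : 'I_d0) : 'M[C]_d := ketbra (e n) (e n).
Definition proj0 d d0 (e : 'I_d0 -> 'cV[C]_d) : 'M[C]_d := \sum_(n < d0) projn e n.

Definition K0 d d0 (e : 'I_d0 -> 'cV[C]_d) (rho : 'M[C]_d) : 'M[C]_d :=
  proj0 e *m rho *m proj0 e.

Definition L1 d d0 (e : 'I_d0 -> 'cV[C]_d) (rho : 'M[C]_d) : 'M[C]_d :=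
  \sum_(n < d0) dissip (projn e n) rho.

Definition Le1 d d0 k (e : 'I_d0 -> 'cV[C]_d) (M : 'I_k -> 'M[C]_d) (rho : 'M[C]_d)
  : 'M[C]_d := K0 e (kraus M (L1 e (K0 e rho))).

Definition kappa d d0 k (e : 'I_d0 -> 'cV[C]_d) (M : 'I_k -> 'M[C]_d) (n m : 'I_d0) : C :=
  \sum_(mu < k) `|(dag (e n) *m M mu *m e m) 0 0| ^+ 2.

End Quantum.

(* Main.v *)
Require Import Defs.
From HB Require Import structures.
From mathcomp Require Import all_boot all_order all_algebra.
From mathcomp Require Import all_classical all_reals all_analysis.
From mathcomp Require Import complex.
Import Order.TTheory GRing.Theory Num.Theory.
Import numFieldNormedType.Exports.
Local Open Scope ring_scope.
Local Open Scope complex_scope.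
Set Implicit Arguments. Unset Strict Implicit.

Lemma dag_mul (R : realType) m n p (A : 'M[R[i]]_(m, n)) (B : 'M[R[i]]_(n, p)) :
  dag (A *m B) = dag B *m dag A.
Proof. by rewrite /dag map_mxM trmx_mul. Qed.

Lemma dagK (R : realType) m n (A : 'M[R[i]]_(m, n)) : dag (dag A) = A.
Proof. by apply/matrixP=> i j; rewrite !mxE conjcK. Qed.

Lemma dagD (R : realType) m n (A B : 'M[R[i]]_(m, n)) : dag (A + B) = dag A + dag B.
Proof. by apply/matrixP=> i j; rewrite !mxE rmorphD. Qed.

Lemma dag_sum (R : realType) m n I (r : seq I) (P : pred I) (F : I -> 'M[R[i]]_(m, n)) :
  dag (\sum_(x <- r | P x) F x) = \sum_(x <- r | P x) dag (F x).
Proof.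
apply/matrixP=> i j; rewrite !mxE summxE rmorph_sum summxE.
by apply: eq_bigr=> x _; rewrite !mxE.
Qed.

Lemma L0_0 (R : realType) d (L : 'M[R[i]]_d -> 'M[R[i]]_d) : is_lindblad L -> L 0 = 0.
Proof.
case=> H [Rs [_ HL]]; rewrite HL /commut mulmx0 mul0mx subrr scaler0 oppr0 add0r.
by rewrite big1 // => Rk _; rewrite /dissip !mulmx0 !mul0mx addr0 scaler0 subrr.
Qed.

Lemma exp_partial_stat (R : realType) d (L : 'M[R[i]]_d -> 'M[R[i]]_d) t rho N :
  L 0 = 0 -> L rho = 0 -> exp_partial L t rho N.+1 = rho.
Proof.
move=> H0 H1; rewrite /exp_partial big_ord_recl /= big1 ?addr0.
  by rewrite expr0 fact0 divr1 scale1r.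
move=> k _; rewrite [X in _ *: X](_ : _ = 0) ?scaler0 //.
rewrite add0n; elim: (nat_of_ord k) => [|n IH] /=; first by rewrite H1.
by rewrite IH H0.
Qed.

Lemma semigroup_stat (R : realType) d (L : 'M[R[i]]_d -> 'M[R[i]]_d) t rho :
  L 0 = 0 -> L rho = 0 -> semigroup L t rho = rho.
Proof.
move=> H0 H1; apply/matrixP=> i j; rewrite mxE.
rewrite (@lim_near_cst _ (@Rhausdorff R) _ _ _ (complex.Re (rho i j))); last first.
  by exists 1%N => // N /= hN; rewrite -(prednK hN) exp_partial_stat.
rewrite (@lim_near_cst _ (@Rhausdorff R) _ _ _ (complex.Im (rho i j))); last first.
  by exists 1%N => // N /= hN; rewrite -(prednK hN) exp_partial_stat.
by case: (rho i j).
Qed.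

Lemma cvg_pinfty_cst (R : realType) (c z : R[i]) :
  cvg_pinfty (fun _ : R => c) z -> c = z.
Proof.
case=> h1 h2.
have e1 := cvg_lim (@Rhausdorff R) h1.
have e2 := cvg_lim (@Rhausdorff R) h2.
rewrite lim_cst in e1; last exact: Rhausdorff.
rewrite lim_cst in e2; last exact: Rhausdorff.
by apply/eqP; rewrite eq_complex e1 e2 !eqxx.
Qed.

Lemma mx11_mul (R : realType) (A B : 'M[R[i]]_1) : (A *m B) 0 0 = A 0 0 * B 0 0.
Proof. by rewrite mxE big_ord1. Qed.

Lemma dag00 (R : realType) (A : 'M[R[i]]_1) : dag A 0 0 = (A 0 0)^*.
Proof. by rewrite !mxE. Qed.

Lemma orth11 (R : realType) d d0 (e : 'I_d0 -> 'cV[R[i]]_d) n m :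
  orthonormal_vecs e -> dag (e n) *m e m = (n == m)%:R%:M.
Proof. by move=> He; rewrite [LHS]mx11_scalar He. Qed.

Lemma projn_e (R : realType) d d0 (e : 'I_d0 -> 'cV[R[i]]_d) n m :
  orthonormal_vecs e -> projn e n *m e m = (n == m)%:R *: e n.
Proof.
by move=> He; rewrite /projn /ketbra -mulmxA orth11 // mul_mx_scalar.
Qed.

Lemma proj0_e (R : realType) d d0 (e : 'I_d0 -> 'cV[R[i]]_d) m :
  orthonormal_vecs e -> proj0 e *m e m = e m.
Proof.
move=> He; rewrite /proj0 mulmx_suml (bigD1 m) //= projn_e // eqxx scale1r.
by rewrite big1 ?addr0 // => n /negbTE hn; rewrite projn_e // hn scale0r.
Qed.

Lemma proj0_E (R : realType) d d0 (e : 'I_d0 -> 'cV[R[i]]_d) :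
  orthonormal_vecs e -> proj0 e *m basis_mx e = basis_mx e.
Proof.
move=> He; apply/matrixP=> i n.
have := congr1 (fun A : 'cV_d => A i 0) (proj0_e n He).
rewrite /= !mxE => <-; apply: eq_bigr => j _; by rewrite !mxE.
Qed.

Lemma dag_projn (R : realType) d d0 (e : 'I_d0 -> 'cV[R[i]]_d) n :
  dag (projn e n) = projn e n.
Proof. by rewrite /projn /ketbra dag_mul dagK. Qed.

Lemma dag_proj0 (R : realType) d d0 (e : 'I_d0 -> 'cV[R[i]]_d) :
  dag (proj0 e) = proj0 e.
Proof. by rewrite /proj0 dag_sum; apply: eq_bigr => n _; rewrite dag_projn. Qed.

Lemma proj0_projn (R : realType) d d0 (e : 'I_d0 -> 'cV[R[i]]_d) n :
  orthonormal_vecs e -> proj0 e *m projn e n = projn e n.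
Proof. by move=> He; rewrite {1}/projn /ketbra mulmxA proj0_e. Qed.

Lemma projn_proj0 (R : realType) d d0 (e : 'I_d0 -> 'cV[R[i]]_d) n :
  orthonormal_vecs e -> projn e n *m proj0 e = projn e n.
Proof.
move=> He; rewrite -[LHS]dagK dag_mul dag_projn dag_proj0 proj0_projn //.
by rewrite dag_projn.
Qed.

Lemma projn_idem (R : realType) d d0 (e : 'I_d0 -> 'cV[R[i]]_d) n :
  orthonormal_vecs e -> projn e n *m projn e n = projn e n.
Proof.
move=> He; rewrite {1}/projn /ketbra -!mulmxA [dag (e n) *m _]mulmxA.
by rewrite orth11 // eqxx mul_scalar_mx scale1r.
Qed.

Lemma sandwich (R : realType) d d0 (e : 'I_d0 -> 'cV[R[i]]_d) n (rho : 'M[R[i]]_d) :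
  projn e n *m rho *m projn e n = (dag (e n) *m rho *m e n) 0 0 *: projn e n.
Proof.
rewrite /projn /ketbra.
have -> : e n *m dag (e n) *m rho *m (e n *m dag (e n)) =
  e n *m (dag (e n) *m rho *m e n) *m dag (e n) by rewrite !mulmxA.
by rewrite [X in e n *m X]mx11_scalar mul_mx_scalar scalemxAl.
Qed.



Lemma half_twice (R : realType) d (A : 'M[R[i]]_d) : 2^-1 *: (A + A) = A.
Proof.
have h : (2^-1 + 2^-1 : R[i]) = 1.
  by rewrite [RHS](splitr 1) mul1r.
by rewrite scalerDr -scalerDl h scale1r.
Qed.

Lemma L1_form (R : realType) d d0 (e : 'I_d0 -> 'cV[R[i]]_d) (rho : 'M[R[i]]_d) :
  orthonormal_vecs e -> proj0 e *m rho = rho -> rho *m proj0 e = rho ->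
  L1 e rho = \sum_(n < d0) (dag (e n) *m rho *m e n) 0 0 *: projn e n - rho.
Proof.
move=> He h1 h2; rewrite /L1 /dissip.
under eq_bigr do rewrite dag_projn projn_idem // sandwich scalerDr.
rewrite sumrB; congr (_ - _).
rewrite big_split /= -!scaler_sumr -mulmx_suml -mulmx_sumr.
by rewrite -/(proj0 e) h1 h2 -scalerDr half_twice.
Qed.

Lemma kraus_add (R : realType) d k (M : 'I_k -> 'M[R[i]]_d) A B :
  kraus M (A + B) = kraus M A + kraus M B.
Proof.
by rewrite /kraus -big_split; apply: eq_bigr => mu _; rewrite mulmxDr mulmxDl.
Qed.

Lemma kraus_opp (R : realType) d k (M : 'I_k -> 'M[R[i]]_d) A :
  kraus M (- A) = - kraus M A.
Proof.
by rewrite /kraus -sumrN; apply: eq_bigr => mu _; rewrite mulmxN mulNmx.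
Qed.

Lemma kraus_scale (R : realType) d k (M : 'I_k -> 'M[R[i]]_d) a A :
  kraus M (a *: A) = a *: kraus M A.
Proof.
by rewrite /kraus scaler_sumr; apply: eq_bigr => mu _; rewrite -scalemxAr -scalemxAl.
Qed.

Lemma kraus_sum (R : realType) d k (M : 'I_k -> 'M[R[i]]_d) d0 (F : 'I_d0 -> 'M[R[i]]_d) :
  kraus M (\sum_(n < d0) F n) = \sum_(n < d0) kraus M (F n).
Proof.
rewrite /kraus exchange_big /=; apply: eq_bigr => mu _.
by rewrite mulmx_sumr mulmx_suml.
Qed.

Lemma kappaE (R : realType) d d0 k (e : 'I_d0 -> 'cV[R[i]]_d) (M : 'I_k -> 'M[R[i]]_d) n m :
  orthonormal_vecs e -> kraus M (projn e m) = projn e m -> kappa e M n m = (n == m)%:R.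
Proof.
move=> He hK; rewrite /kappa.
rewrite (eq_bigr (fun mu => (dag (e n) *m (M mu *m projn e m *m dag (M mu)) *m e n) 0 0)); last first.
  move=> mu _; rewrite sqr_normc -dag00 !dag_mul dagK -mx11_mul /projn /ketbra.
  by rewrite !mulmxA.
rewrite -summxE -mulmx_suml -mulmx_sumr -/(kraus M (projn e m)) hK.
rewrite -mulmxA projn_e // -scalemxAr mxE orth11 // mxE eqxx mulr1n.
by rewrite eq_sym; case: (n == m); rewrite ?mulr1 ?mulr0.
Qed.

Lemma projn_density (R : realType) d d0 (e : 'I_d0 -> 'cV[R[i]]_d) n :
  orthonormal_vecs e -> density (projn e n).
Proof.
move=> He; split; first exact: dag_projn.
  move=> v; rewrite /projn /ketbra !mulmxA -mulmxA mx11_mul.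
  have -> : (dag (e n) *m v) 0 0 = ((dag v *m e n) 0 0)^*.
    by rewrite -dag00 dag_mul dagK.
  exact: mulcJ_ge0.
by rewrite /projn /ketbra mxtrace_mulC orth11 // eqxx mxtrace_scalar.
Qed.

Lemma col_basis (R : realType) d d0 (e : 'I_d0 -> 'cV[R[i]]_d) n :
  col n (basis_mx e) = e n.
Proof. by apply/matrixP=> i j; rewrite !mxE ord1. Qed.

Lemma projn_supported (R : realType) d d0 (e : 'I_d0 -> 'cV[R[i]]_d) n :
  supported_on (basis_mx e) (projn e n).
Proof.
exists (delta_mx n 0 *m dag (e n)).
by rewrite mulmxA -colE col_basis.
Qed.

Lemma kraus_fix (R : realType) d k (L0 : 'M[R[i]]_d -> 'M[R[i]]_d) (M : 'I_k -> 'M[R[i]]_d) rho :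
  is_lindblad L0 ->
  (forall rho, density rho ->
     forall i j, cvg_pinfty (fun t => semigroup L0 t rho i j) (kraus M rho i j)) ->
  density rho -> L0 rho = 0 -> kraus M rho = rho.
Proof.
move=> HL HU Hd H0; apply/matrixP=> i j; apply/esym/cvg_pinfty_cst.
have := HU rho Hd i j.
by rewrite (_ : (fun t => _) = fun _ => rho i j) //; apply: funext => t;
  rewrite semigroup_stat // L0_0.
Qed.

Lemma sandwich_sum (R : realType) d d0 (P : 'M[R[i]]_d) (F : 'I_d0 -> 'M[R[i]]_d) c :
  (forall n, P *m F n = F n) -> (forall n, F n *m P = F n) ->
  P *m (\sum_(n < d0) c n *: F n) *m P = \sum_(n < d0) c n *: F n.
Proof.
move=> hl hr; rewrite mulmx_sumr mulmx_suml; apply: eq_bigr => n _.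
by rewrite -scalemxAr -scalemxAl hl hr.
Qed.

Theorem proposition1 (R : realType) (d d0 k : nat)
    (L0 : 'M[R[i]]_d -> 'M[R[i]]_d)
    (e : 'I_d0 -> 'cV[R[i]]_d)
    (M : 'I_k -> 'M[R[i]]_d) :
  is_lindblad L0 ->
  orthonormal_vecs e ->
  (* Kraus normalization sum_mu M_mu^dag M_mu = I *)
  \sum_(mu < k) dag (M mu) *m M mu = 1%:M ->
  (* U_0 rho := lim_{t -> oo} e^{t L_0} rho exists and equals sum_mu M_mu rho M_mu^dag *)
  (forall rho, density rho ->
     forall i j, cvg_pinfty (fun t => semigroup L0 t rho i j) (kraus M rho i j)) ->
  (* D_0 = { rho in D : L_0 rho = 0 } is the set of density operators supported on H_0 *)
  (forall rho, density rho -> (L0 rho = 0 <-> supported_on (basis_mx e) rho)) ->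
  forall rhoe, density rhoe -> L0 rhoe = 0 ->
    Le1 e M rhoe =
    \sum_(n < d0) \sum_(m < d0)
       kappa e M n m *: dissip (ketbra (e n) (e m)) rhoe.
Proof.
move=> HL He _ HU HD rho Hd H0.
have KP : forall n, kraus M (projn e n) = projn e n.
  move=> n; apply: (kraus_fix HL HU (projn_density n He)).
  by apply/(HD _ (projn_density n He)); exact: projn_supported.
have Kr : kraus M rho = rho by exact: (kraus_fix HL HU Hd H0).
have h1 : proj0 e *m rho = rho.
  have [X ->] := (HD rho Hd).1 H0.
  by rewrite mulmxA proj0_E.
have h2 : rho *m proj0 e = rho.
  case: Hd => Hh _ _.
  by rewrite -[LHS]dagK dag_mul dag_proj0 Hh h1 Hh.
have K0r : K0 e rho = rho by rewrite /K0 h1 h2.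
have -> : \sum_(n < d0) \sum_(m < d0) kappa e M n m *: dissip (ketbra (e n) (e m)) rho
    = L1 e rho.
  rewrite /L1; apply: eq_bigr => n _.
  rewrite (bigD1 n) //= kappaE // eqxx scale1r big1 ?addr0 //.
  by move=> m /negbTE hm; rewrite kappaE // eq_sym hm scale0r.
rewrite /Le1 K0r L1_form // kraus_add kraus_opp kraus_sum Kr.
under eq_bigr do rewrite kraus_scale KP.
rewrite /K0 mulmxBr mulmxBl h1 h2 sandwich_sum //.
  by move=> n; rewrite proj0_projn.
by move=> n; rewrite projn_proj0.
Qed.
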